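(* Let $k\ge1$ and let $G$ be a finite $k$-connected graph with $|V_G|\ge k+1$. If $\mathrm{Ent}(G)=k$, then $\mathrm{Cycl}(G)=\mathrm{Ent}(G)=k$.
   Context: Graphs are finite and undirected. A graph is $k$-connected if one must remove at least $k$ vertices to disconnect it (by convention $K_m$, $m\ge3$, has connectivity $m-1$). $\mathrm{Cycl}(G)$ (cyclicity) is the minimum size of a feedback vertex set of the symmetric digraph of $G$ (each edge viewed as two opposite arcs); equivalently the minimum size of a set of vertices containing an endpoint of every edge. Entanglement: in the game $\mathrm{Ent}(G,k)$ Thief plays against $k$ cops. Initially no cop is placed and Thief picks a vertex. Each round, Cops may do nothing, place a new cop (at most $k$ in total) on Thief's current vertex, or move a placed cop to Thief's current vertex; then Thief must move along an edge to an adjacent vertex not occupied by a cop, and is caught if he cannot. Infinite plays are won by Thief. $\mathrm{Ent}(G)$ is the least $k$ for which Cops have a winning strategy. *)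

(* Defs.v *)
From mathcomp Require Import all_boot.
Set Implicit Arguments.
Unset Strict Implicit.
Unset Printing Implicit Defensive.

Definition simple_graph (T : finType) (e : rel T) : Prop :=
  symmetric e /\ irreflexive e.

Definition connected_on (T : finType) (e : rel T) (A : {set T}) : Prop :=
  forall x y, x \in A -> y \in A ->
    connect [rel u v | [&& e u v, u \in A & v \in A]] x y.

(* k-connected: more than k vertices, and removing fewer than k vertices
   leaves a connected graph (so K_m has connectivity m-1). *)
Definition k_connected (T : finType) (e : rel T) (k : nat) : Prop :=
  k < #|T| /\ forall S : {set T}, #|S| < k -> connected_on e (~: S).

(* Cyclicity = minimum size of a vertex cover. *)
Definition vertex_cover (T : finType) (e : rel T) (S : {set T}) : bool :=
  [forall x, forall y, e x y ==> (x \in S) || (y \in S)].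

Definition Cycl (T : finType) (e : rel T) : nat :=
  \big[minn/#|T|]_(S : {set T} | vertex_cover e S) #|S|.

(* Since a cop is only ever placed/moved onto the thief's
   current vertex, and the thief always stands on a cop-free vertex, distinct
   cops occupy distinct vertices; a position is thus the set C of occupied
   vertices (|C| = number of placed cops) and the thief's vertex v.
   cop_move k C v C' : the cops may go from C to C' in one move. *)
Definition cop_move (T : finType) (k : nat) (C : {set T}) (v : T) (C' : {set T}) : Prop :=
  C' = C
  \/ (#|C| < k /\ C' = v |: C)
  \/ (exists2 c, c \in C & C' = v |: (C :\ c)).

(* cops_force e k C v : from position (C, v) with Cops to move, Cops have a
   strategy ensuring that Thief is caught after finitely many rounds
   (reachability winning condition; infinite plays are won by Thief). *)
Inductive cops_force (T : finType) (e : rel T) (k : nat) : {set T} -> T -> Prop :=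
  | CopsForce C v C' :
      cop_move k C v C' ->
      (forall w, e v w -> w \notin C' -> cops_force e k C' w) ->
      cops_force e k C v.

Definition cops_win (T : finType) (e : rel T) (k : nat) : Prop :=
  forall v : T, cops_force e k set0 v.

Definition Ent_eq (T : finType) (e : rel T) (k : nat) : Prop :=
  cops_win e k /\ forall j, j < k -> ~ cops_win e j.

(* Main.v *)
Require Import Defs.
From mathcomp Require Import all_boot zify.
Set Implicit Arguments.
Unset Strict Implicit.
Unset Printing Implicit Defensive.

Lemma bigmin_seq_le (T : finType) (e : rel T) (D : {set T}) (s : seq {set T}) :
  vertex_cover e D -> D \in s ->
  \big[minn/#|T|]_(S <- s | vertex_cover e S) #|S| <= #|D|.
Proof.
move=> HD; elim: s => [|a s IH] //; rewrite big_cons inE.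
case/orP=> [/eqP <-|Hs]; first by rewrite HD geq_minl.
case: ifP => _; last exact: IH.
by rewrite geq_min IH // orbT.
Qed.

Lemma Cycl_le (T : finType) (e : rel T) (D : {set T}) :
  vertex_cover e D -> Cycl e <= #|D|.
Proof. by move=> HD; apply: bigmin_seq_le => //; rewrite mem_index_enum. Qed.

Lemma Cycl_ex (T : finType) (e : rel T) :
  exists2 D, vertex_cover e D & #|D| = Cycl e.
Proof.
rewrite /Cycl; apply: (big_ind (fun m => exists2 D, vertex_cover e D & #|D| = m)).
- exists [set: T]; last by apply: eq_card => x; rewrite !inE.
  by apply/forallP=> x; apply/forallP=> y; rewrite in_setT implybT.
- move=> x y [Dx Hx <-] [Dy Hy <-]; rewrite /minn; case: ifP => _.
  + by exists Dx.
  + by exists Dy.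
- by move=> S HS; exists S.
Qed.

Lemma cover_force_in (T : finType) (e : rel T) (S : {set T}) :
  vertex_cover e S -> forall n (C : {set T}) v, #|S| - #|C| <= n -> C \subset S ->
  v \notin C -> v \in S -> cops_force e #|S| C v.
Proof.
move=> HS; elim=> [|n IH] C v Hn HC HvC HvS.
- have: C \proper S by apply/properP; split => //; exists v.
  by move/proper_card; move: Hn; lia.
have HCS : #|C| < #|S| by apply: proper_card; apply/properP; split => //; exists v.
apply: (@CopsForce _ _ _ _ _ (v |: C)).
  by right; left.
have HC' : v |: C \subset S by rewrite subUset sub1set HvS HC.
have Hcard : #|S| - #|v |: C| <= n by rewrite cardsU1 HvC; move: Hn HCS; rewrite add1n; lia.
move=> w Hvw HwC.
case HwS: (w \in S); first exact: IH.
apply: (@CopsForce _ _ _ _ _ (v |: C)); first by left.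
move=> x Hwx HxC; apply: IH => //.
move/forallP: HS => /(_ w) /forallP /(_ x); rewrite Hwx HwS /=; exact.
Qed.

Lemma cover_win (T : finType) (e : rel T) (S : {set T}) :
  vertex_cover e S -> cops_win e #|S|.
Proof.
move=> HS v.
have H0 : forall w, w \in S -> cops_force e #|S| set0 w.
  move=> w Hw; apply: (@cover_force_in _ _ _ HS #|S|) => //.
  - by rewrite cards0 subn0.
  - exact: sub0set.
  - by rewrite in_set0.
case HvS: (v \in S); first exact: H0.
apply: (@CopsForce _ _ _ _ _ set0); first by left.
move=> w Hvw _; apply: H0.
by move/forallP: HS => /(_ v) /forallP /(_ w); rewrite Hvw HvS.
Qed.

Lemma trap (T : finType) (e : rel T) (k : nat) :
  simple_graph e -> k_connected e k ->
  forall (D : {set T}) v, v \in D -> #|D| <= k ->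
  (forall w, e v w -> w \notin D -> forall x, e w x -> x \in D) ->
  vertex_cover e D.
Proof.
move=> [Hsym Hirr] [_ Hcon] D v HvD HDk Htrap.
set S := D :\ v.
have HS : #|S| < k by move: HDk; rewrite (cardsD1 v D) HvD.
have Hc := Hcon S HS.
have HvS : v \in ~: S by rewrite !inE eqxx.
have Hreach : forall x, x \in ~: S -> x = v \/ (e v x && (x \notin D)).
  have gen : forall p u, (u = v \/ (e v u && (u \notin D))) ->
      path [rel a b | [&& e a b, a \in ~: S & b \in ~: S]] u p ->
      (last u p = v \/ (e v (last u p) && (last u p \notin D))).
    elim=> [|y p IH] u Hu //= /andP [/and3P [Huy HuS HyS] Hp].
    apply: IH => //.
    case: Hu => [Hu|/andP [Hvu HuD]].
    - subst u; right; rewrite Huy /=.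
      move: HyS; rewrite !inE negb_and negbK.
      case/orP => //= /eqP Hy; subst y; by rewrite Hirr in Huy.
    - left; have HyD := Htrap u Hvu HuD y Huy.
      move: HyS; rewrite !inE negb_and negbK HyD orbF; by move/eqP.
  move=> x Hx; have /connectP [p Hp ->] := Hc v x HvS Hx.
  by apply: gen => //; left.
apply/forallP=> x; apply/forallP=> y; apply/implyP=> Hxy.
case HxD: (x \in D) => //=; case HyD: (y \in D) => //.
have Hx : x \in ~: S by rewrite !inE HxD andbF.
case: (Hreach x Hx) => [Hxv|/andP [Hvx _]].
  by subst x; rewrite HvD in HxD.
by rewrite (Htrap x Hvx (negbT HxD) y Hxy) in HyD.
Qed.

Lemma escape (T : finType) (e : rel T) (k : nat) :
  simple_graph e -> k_connected e k ->
  (forall D, vertex_cover e D -> k < #|D|) ->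
  forall C v, cops_force e k C v -> #|C| <= k -> v \notin C ->
  (exists w, e v w && (w \notin C)) -> False.
Proof.
move=> Hs Hk NC C0 v0 H; elim: H => {C0 v0} C v C' Hmove _ IH HC HvC [w Hw].
have key : v \in C' -> #|C'| <= k -> False.
  move=> HvC' HC'.
  case Hex: [exists w, e v w && (w \notin C') && [exists x, e w x && (x \notin C')]].
  - case/existsP: Hex => w' /andP [/andP [Hvw' Hw'C'] /existsP [x Hx]].
    by apply: (IH w') => //; exists x.
  - have Hcov : vertex_cover e C'.
      apply: (trap Hs Hk HvC' HC') => w' Hvw' Hw' x Hwx.
      apply/negPn/negP => Hx; move/negbT: Hex; move/existsPn/(_ w').
      by rewrite Hvw' Hw' /=; move/existsPn/(_ x); rewrite Hwx Hx.
    by have := NC _ Hcov; lia.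
case: Hmove => [HC'|[[Hlt HC']|[c Hc HC']]]; subst C'.
- move/andP: Hw => [Hvw HwC]; apply: (IH w) => //.
  by exists v; rewrite (proj1 Hs) Hvw HvC.
- by apply: key; rewrite ?setU11 // cardsU1 HvC; lia.
- apply: key; first by rewrite setU11.
  rewrite cardsU1; have := cardsD1 c C; rewrite Hc.
  have := leq_b1 (v \notin C :\ c); lia.
Qed.

Theorem mainTheorem8 (T : finType) (e : rel T) (k : nat) :
  simple_graph e ->
  1 <= k ->
  k_connected e k ->
  k.+1 <= #|T| ->
  Ent_eq e k ->
  Cycl e = k.
Proof.
move=> Hs Hk1 Hk HT [Hwin Hlose].
apply/eqP; rewrite eqn_leq; apply/andP; split.
- rewrite leqNgt; apply/negP => Hlt.
  have NC : forall D, vertex_cover e D -> k < #|D|.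
    by move=> D HD; apply: leq_trans Hlt (Cycl_le HD).
  have : 0 < #|T| by lia.
  case/card_gt0P => v _.
  have : 0 < #|[set~ v]| by rewrite cardsC1; lia.
  case/card_gt0P => x; rewrite !inE => Hxv.
  have H0 : #|@set0 T| < k by rewrite cards0; lia.
  have Hc := (proj2 Hk) set0 H0.
  have Hv0 : v \in ~: set0 by rewrite !inE.
  have Hx0 : x \in ~: set0 by rewrite !inE.
  have /connectP [p Hp Hlast] := Hc v x Hv0 Hx0.
  case: p Hp Hlast => [|y p] /=; first by move=> _ Hx; rewrite Hx eqxx in Hxv.
  case/andP => /and3P [Hvy _ _] _ _.
  apply: (escape Hs Hk NC (Hwin v)); rewrite ?cards0 ?in_set0 //.
  by exists y; rewrite Hvy in_set0.
- rewrite leqNgt; apply/negP => Hlt.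
  have [D HD HDc] := Cycl_ex e.
  apply: (Hlose _ Hlt); rewrite -HDc; exact: cover_win.
Qed.
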